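(* Let $M=\begin{bmatrix} A & B\\ 0 & C\end{bmatrix}$ be an ACI-matrix over a field $\mathbb{F}$ whose lower-left zero block is Big or Medium. Then the following are equivalent: (i) $A$ is FRmR and $C$ is FCmR; (ii) $\mathrm{maxRank}(M)=\mathrm{rows}(A)+\mathrm{cols}(C)$.
   Context: Let $\mathbb{F}$ be a field. An ACI-matrix is a matrix with entries in $\mathbb{F}[x_1,\dots,x_k]$ whose entries are polynomials of degree at most one and such that no indeterminate appears in two different columns. A completion is an assignment of values in $\mathbb{F}$ to all indeterminates; $\mathrm{maxRank}(M)$ is the maximum rank of a completion. $\mathrm{rows}(\cdot)$, $\mathrm{cols}(\cdot)$ denote numbers of rows and columns. Matrices of size $0\times q$ (wide degenerate), $p\times 0$ (tall degenerate) and $0\times 0$ (void) are ACI-matrices and blocks may be degenerate. An ACI-matrix $N$ is FRmR if $\mathrm{maxRank}(N)=\mathrm{rows}(N)$ and FCmR if $\mathrm{maxRank}(N)=\mathrm{cols}(N)$; by convention tall degenerate ones are FRmR, wide degenerate ones are FCmR, and the void one is both. For an $m\times n$ block matrix $\begin{bmatrix} A & B\\ 0 & C\end{bmatrix}$ whose lower-left block $0$ is $r\times s$, the zero block is Big if $r+s>\max\{m,n\}$ and Medium if $r+s=\max\{m,n\}$. *)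

(* Defs.v *)
From HB Require Import structures.
From mathcomp Require Import all_boot all_order all_algebra.
From mathcomp Require Import boolp.
Set Implicit Arguments. Unset Strict Implicit. Unset Printing Implicit Defensive.
Import GRing.Theory.
Local Open Scope ring_scope.

(* An m x n matrix with entries in F[x_0,...,x_{k-1}] of degree <= 1,
   represented by its constant part and, for each indeterminate x_l,
   the matrix of coefficients of x_l:  entry (i,j) = cst i j + sum_l coef l i j * x_l. *)
Record affmx (F : fieldType) (m n k : nat) := AffMx {
  acst : 'M[F]_(m, n);
  acoef : 'I_k -> 'M[F]_(m, n)
}.

Definition is_ACI (F : fieldType) m n k (M : affmx F m n k) : Prop :=
  forall (l : 'I_k) (i1 i2 : 'I_m) (j1 j2 : 'I_n),
    acoef M l i1 j1 != 0 -> acoef M l i2 j2 != 0 -> j1 = j2.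

Definition completion (F : fieldType) m n k (M : affmx F m n k) (v : 'I_k -> F)
  : 'M[F]_(m, n) := acst M + \sum_(l < k) v l *: acoef M l.

Definition maxRank (F : fieldType) m n k (M : affmx F m n k) : nat :=
  \max_(r < (minn m n).+1 | `[< exists v, \rank (completion M v) = r >]) r.

Definition FRmR (F : fieldType) m n k (M : affmx F m n k) : Prop :=
  maxRank M = m \/ n = 0%N.
Definition FCmR (F : fieldType) m n k (M : affmx F m n k) : Prop :=
  maxRank M = n \/ m = 0%N.

Definition aff_map (F : fieldType) m n m' n' k
  (f : 'M[F]_(m, n) -> 'M[F]_(m', n')) (M : affmx F m n k) : affmx F m' n' k :=
  AffMx (f (acst M)) (fun l => f (acoef M l)).

Definition blkA (F : fieldType) p r s q k (M : affmx F (p + r) (s + q) k) :=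
  aff_map (@ulsubmx F p r s q) M.
Definition blkB (F : fieldType) p r s q k (M : affmx F (p + r) (s + q) k) :=
  aff_map (@ursubmx F p r s q) M.
Definition blkC (F : fieldType) p r s q k (M : affmx F (p + r) (s + q) k) :=
  aff_map (@drsubmx F p r s q) M.
Definition lowleft_zero (F : fieldType) p r s q k (M : affmx F (p + r) (s + q) k) : Prop :=
  dlsubmx (acst M) = 0 /\ forall l, dlsubmx (acoef M l) = 0.

(* Main.v *)
Require Import Defs.
From HB Require Import structures.
From mathcomp Require Import all_boot all_order all_algebra.
From mathcomp Require Import boolp.
From mathcomp Require Import zify.
Set Implicit Arguments. Unset Strict Implicit. Unset Printing Implicit Defensive.
Import GRing.Theory.
Local Open Scope ring_scope.

Lemma rank_lt (F : fieldType) m n (A : 'M[F]_(m, n)) : (\rank A < (minn m n).+1)%N.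
Proof. by rewrite ltnS leq_min rank_leq_row rank_leq_col. Qed.

Lemma maxRank_ge (F : fieldType) m n k (M : affmx F m n k) v :
  (\rank (completion M v) <= maxRank M)%N.
Proof.
rewrite /maxRank.
apply: (@leq_bigmax_cond _ _ (fun i : 'I_(minn m n).+1 => nat_of_ord i) (Ordinal (rank_lt (completion M v)))).
by apply/asboolP; exists v.
Qed.

Lemma maxRank_ex (F : fieldType) m n k (M : affmx F m n k) :
  exists v, \rank (completion M v) = maxRank M.
Proof.
rewrite /maxRank.
have P0 : `[< exists v, \rank (completion M v) = Ordinal (rank_lt (completion M (fun _ => 0)))>].
  by apply/asboolP; exists (fun _ => 0).
rewrite (bigmax_eq_arg _ P0).
case: arg_maxnP => // i /asboolP [v hv] _.
by exists v.
Qed.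

Lemma completion_map (F : fieldType) m n m' n' k
  (f : 'M[F]_(m, n) -> 'M[F]_(m', n')) g h (M : affmx F m n k) v :
  (forall A i j, f A i j = A (g i) (h j)) ->
  completion (aff_map f M) v = f (completion M v).
Proof.
move=> fE; apply/matrixP=> i j; rewrite fE /completion /= !mxE fE !summxE.
by congr (_ + _); apply: eq_bigr => l _; rewrite !mxE fE.
Qed.

Section Blk.
Variables (F : fieldType) (p r s q k : nat) (M : affmx F (p + r) (s + q) k).

Lemma complA v : completion (blkA M) v = ulsubmx (completion M v).
Proof. rewrite (completion_map (g:=@lshift p r) (h:=@lshift s q)) // => A i j; by rewrite /ulsubmx !mxE. Qed.
Lemma complB v : completion (blkB M) v = ursubmx (completion M v).
Proof. rewrite (completion_map (g:=@lshift p r) (h:=@rshift s q)) // => A i j; by rewrite /ursubmx !mxE. Qed.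
Lemma complC v : completion (blkC M) v = drsubmx (completion M v).
Proof. rewrite (completion_map (g:=@rshift p r) (h:=@rshift s q)) // => A i j; by rewrite /drsubmx !mxE. Qed.

Lemma compl_dl v : lowleft_zero M -> dlsubmx (completion M v) = 0.
Proof.
case=> h0 hl; apply/matrixP=> i j; rewrite !mxE summxE.
have := h0; move/matrixP => /(_ i j); rewrite !mxE => ->.
rewrite add0r big1 // => l _; rewrite !mxE.
have := hl l; move/matrixP => /(_ i j); rewrite !mxE => ->.
by rewrite mulr0.
Qed.
End Blk.

Lemma rank_ut_le (F : fieldType) p r s q (A : 'M[F]_(p, s)) B (C : 'M[F]_(r, q)) :
  (\rank (block_mx A B 0 C) <= p + \rank C)%N.
Proof.
rewrite block_mxEv -addsmxE.
apply: leq_trans (mxrank_adds_leqif _ _) _.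
by rewrite rank_row_0mx leq_add2r rank_leq_row.
Qed.

Lemma rank_ut_le2 (F : fieldType) p r s q (A : 'M[F]_(p, s)) B (C : 'M[F]_(r, q)) :
  (\rank (block_mx A B 0 C) <= \rank A + q)%N.
Proof.
rewrite -mxrank_tr tr_block_mx trmx0 block_mxEv -addsmxE.
apply: leq_trans (mxrank_adds_leqif _ _) _.
by rewrite rank_row_mx0 mxrank_tr leq_add2l rank_leq_row.
Qed.

Lemma rank_ut_ge (F : fieldType) p r s q (A : 'M[F]_(p, s)) B (C : 'M[F]_(r, q)) :
  \rank A = p -> (\rank A + \rank C <= \rank (block_mx A B 0 C))%N.
Proof.
move=> rA; rewrite block_mxEv -addsmxE mxrank_disjoint_sum.
  rewrite rank_row_0mx leq_add2r.
  apply: leq_trans (mxrankM_maxl (row_mx A B) (col_mx 1%:M 0)).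
  by rewrite mul_row_col mulmx1 mulmx0 addr0.
apply/eqP/rowV0P => v; rewrite sub_capmx => /andP[/submxP[x ->]].
rewrite mul_mx_row => /submxP[y]; rewrite mul_mx_row mulmx0.
move=> /eq_row_mx[/eqP xA0 _].
have : row_free A by rewrite /row_free rA.
move/(mulmx_free_eq0 x); rewrite xA0 => /esym/eqP ->.
by rewrite !mul0mx row_mx0.
Qed.


Theorem theorem2p4 (F : fieldType) (p r s q k : nat)
  (M : affmx F (p + r) (s + q) k) :
  is_ACI M ->
  lowleft_zero M ->
  (* zero block is Big or Medium: r + s >= max(rows M, cols M) *)
  (maxn (p + r) (s + q) <= r + s)%N ->
  ((FRmR (blkA M) /\ FCmR (blkC M)) <-> maxRank M = (p + q)%N).
Proof.
move=> aci llz hmax.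
have hp : (p <= s)%N by move: hmax; rewrite geq_max; lia.
have hq : (q <= r)%N by move: hmax; rewrite geq_max; lia.
have blk v : completion M v = block_mx (completion (blkA M) v)
    (completion (blkB M) v) 0 (completion (blkC M) v).
  by rewrite complA complB complC -(compl_dl v llz) submxK.
have ub v : (\rank (completion M v) <= p + q)%N.
  rewrite blk; apply: leq_trans (rank_ut_le _ _ _) _.
  by rewrite leq_add2l rank_leq_col.
split.
- case=> hA hC.
  have [vA hvA] : exists vA, \rank (completion (blkA M) vA) = p.
    case: hA => [hA|s0]; first by case: (maxRank_ex (blkA M)) => v hv; exists v; rewrite hv.
    exists (fun _ => 0); apply/eqP; rewrite eqn_leq rank_leq_row /=; lia.
  have [vC hvC] : exists vC, \rank (completion (blkC M) vC) = q.
    case: hC => [hC|r0]; first by case: (maxRank_ex (blkC M)) => v hv; exists v; rewrite hv.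
    exists (fun _ => 0); apply/eqP; rewrite eqn_leq rank_leq_col /=; lia.
  pose cond l := [exists i, exists j : 'I_s, acoef M l i (lshift q j) != 0].
  pose v l := if cond l then vA l else vC l.
  have eA : completion (blkA M) v = completion (blkA M) vA.
    rewrite /completion; congr (_ + _); apply: eq_bigr => l _.
    rewrite /v; case: ifP => // /negbT hn.
    have -> : acoef (blkA M) l = 0; last by rewrite !scaler0.
    apply/matrixP => i j; rewrite /= /ulsubmx !mxE; apply/eqP.
    apply: contraNT hn => hne; apply/existsP; exists (lshift r i); apply/existsP; exists j.
    exact: hne.
  have eC : completion (blkC M) v = completion (blkC M) vC.
    rewrite /completion; congr (_ + _); apply: eq_bigr => l _.
    rewrite /v; case: ifP => // /existsP [i' /existsP [j' hn]].
    have -> : acoef (blkC M) l = 0; last by rewrite !scaler0.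
    apply/matrixP => i j; rewrite /= /drsubmx !mxE; apply/eqP.
    apply/negP => /negP hne.
    have := aci l _ _ _ _ hn hne => /(congr1 val) /=; have := ltn_ord j'; lia.
  apply/eqP; rewrite eqn_leq; apply/andP; split.
    by case: (maxRank_ex M) => w <-; apply: ub.
  apply: leq_trans (maxRank_ge M v).
  rewrite blk eA eC.
  by have := rank_ut_ge (completion (blkB M) v) (completion (blkC M) vC) hvA; rewrite hvA hvC.
- move=> hM.
  case: (maxRank_ex M) => v; rewrite hM => hv.
  have := rank_ut_le (completion (blkA M) v) (completion (blkB M) v) (completion (blkC M) v).
  have := rank_ut_le2 (completion (blkA M) v) (completion (blkB M) v) (completion (blkC M) v).
  rewrite -!blk hv => h2 h1.
  split; left; apply/eqP; rewrite eqn_leq; apply/andP; split.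
  + by case: (maxRank_ex (blkA M)) => w <-; apply: rank_leq_row.
  + apply: leq_trans (maxRank_ge _ v); lia.
  + by case: (maxRank_ex (blkC M)) => w <-; apply: rank_leq_col.
  + apply: leq_trans (maxRank_ge _ v); lia.
Qed.
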